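(* Let $m\ge 1$ and let $(a_1,b_1),\dots,(a_m,b_m)$ be pairs of non-negative integers with $(a_k,b_k)\neq(1,0)$ for every $k$. For $n\ge 1$ let $\mathcal{A}_n$ be the rational hyperplane arrangement in $\mathbb{R}^n$ consisting of the hyperplanes $x_i=x_j$ for $1\le i<j\le n$ together with the hyperplanes $x_i=a_kx_j+b_k$ for all $1\le i\neq j\le n$ and $1\le k\le m$. For a prime $q$, let $G_q$ be the simple graph with vertex set $\mathbb{Z}/q\mathbb{Z}=\{0,1,\dots,q-1\}$ in which two distinct vertices $u,v$ are adjacent if and only if $u\equiv a_kv+b_k \pmod q$ or $v\equiv a_ku+b_k\pmod q$ for some $1\le k\le m$. Then for every sufficiently large prime $q$, the number of $n$-element independent sets of $G_q$ equals $\chi_{\mathcal{A}_n}(q)/n!$.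
   Context: For a finite arrangement $\mathcal{A}$ of affine hyperplanes in $\mathbb{R}^n$, the characteristic polynomial is $\chi_{\mathcal{A}}(t)=\sum_{x\in L(\mathcal{A})}\mu(\hat 0,x)\,t^{\dim x}$, where $L(\mathcal{A})$ is the poset of all nonempty intersections of subsets of hyperplanes of $\mathcal{A}$ (including $\hat 0=\mathbb{R}^n$) ordered by reverse inclusion and $\mu$ is its Möbius function; equivalently $\chi_{\mathcal{A}}(t)=\sum_{\mathcal{B}}(-1)^{\#\mathcal{B}}t^{n-\operatorname{rank}(\mathcal{B})}$, the sum over subsets $\mathcal{B}\subseteq\mathcal{A}$ whose hyperplanes have nonempty common intersection, where $\operatorname{rank}(\mathcal{B})$ is the dimension of the span of the normal vectors of the hyperplanes in $\mathcal{B}$. An independent set of a graph is a set of vertices no two of which are adjacent. *)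

(* Defs.v *)
From HB Require Import structures.
From mathcomp Require Import all_boot all_order all_algebra.
From Stdlib Require Import ClassicalEpsilon.
Set Implicit Arguments. Unset Strict Implicit. Unset Printing Implicit Defensive.
Import Order.TTheory GRing.Theory Num.Theory.
Local Open Scope ring_scope.

Definition decP (P : Prop) : bool :=
  if excluded_middle_informative P then true else false.

(* An affine hyperplane  {x | sum_j c_j x_j = d}  in Q^n, given by (c, d), c <> 0. *)
Definition hyp (n : nat) : Type := ('rV[rat]_n * rat)%type.

(* Canonical representative of a hyperplane: scale so that the first nonzero
   coefficient of the normal vector is 1 (two pairs with nonzero normals give
   the same hyperplane iff their normal forms coincide). *)
Definition hyp_normalize n (h : hyp n) : hyp n :=
  let k := head 1 [seq x <- [seq h.1 0 j | j <- enum 'I_n] | x != 0] in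
  (k^-1 *: h.1, h.2 / k).

Definition arrangement n (s : seq (hyp n)) : seq (hyp n) :=
  undup (map (@hyp_normalize n) s).

Section Charpoly.
Variables (n : nat) (A : seq (hyp n)).

Definition inter_nonempty (B : {set 'I_(size A)}) : Prop :=
  exists x : 'rV[rat]_n, forall i : 'I_(size A), i \in B ->
    \sum_(j < n) (nth (0, 0) A i).1 0 j * x 0 j = (nth (0, 0) A i).2.

Definition normals_mx (B : {set 'I_(size A)}) : 'M[rat]_(size A, n) :=
  \matrix_(i, j) (if i \in B then (nth (0, 0) A i).1 0 j else 0).

Definition arr_rank (B : {set 'I_(size A)}) : nat := \rank (normals_mx B).

Definition arr_charpoly : {poly rat} :=
  \sum_(B : {set 'I_(size A)} | decP (inter_nonempty B))
     (-1) ^+ #|B| *: 'X^(n - arr_rank B).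
End Charpoly.

Definition unit_vec n (i : 'I_n) : 'rV[rat]_n := delta_mx 0 i.

Definition arrA (m : nat) (a b : 'I_m -> nat) (n : nat) : seq (hyp n) :=
  arrangement
    ([seq (unit_vec p.1 - unit_vec p.2, 0)
          | p : 'I_n * 'I_n <- enum [set: 'I_n * 'I_n] & (p.1 < p.2)%N]
     ++ [seq (unit_vec p.1.1 - (a p.2)%:R *: unit_vec p.1.2, (b p.2)%:R)
          | p : 'I_n * 'I_n * 'I_m <- enum [set: 'I_n * 'I_n * 'I_m] & p.1.1 != p.1.2]).

Definition Gadj (m : nat) (a b : 'I_m -> nat) (q : nat) (u v : 'I_q) : bool :=
  (u != v) &&
  [exists k : 'I_m, (u == (a k * v + b k) %% q :> nat)%N
                    || (v == (a k * u + b k) %% q :> nat)%N].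

Definition independent (m : nat) (a b : 'I_m -> nat) (q : nat) (S : {set 'I_q}) : bool :=
  [forall u in S, forall v in S, ~~ Gadj a b u v].

Definition num_indep (m : nat) (a b : 'I_m -> nat) (q n : nat) : nat :=
  #|[set S : {set 'I_q} | (#|S| == n) && independent a b S]|.

(* Main.v *)
Require Import Defs.
From HB Require Import structures.
From mathcomp Require Import all_boot all_order all_algebra.
Import Order.TTheory GRing.Theory Num.Theory.
Local Open Scope ring_scope.
From mathcomp Require Import ring.
From Stdlib Require Import ClassicalEpsilon.
Set Implicit Arguments. Unset Strict Implicit. Unset Printing Implicit Defensive.

Section FieldCount.
Variable F : finFieldType.

Lemma card_rowspace n k (K : 'M[F]_(k, n)) :
  #|[set y : 'rV[F]_n | (y <= K)%MS]| = (#|F| ^ \rank K)%N.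
Proof.
have -> : [set y : 'rV[F]_n | (y <= K)%MS] =
   [set z *m row_base K | z in [set: 'rV[F]_(\rank K)]].
  apply/setP => y; rewrite inE; apply/idP/imsetP.
    rewrite -(eq_row_base K) => /submxP [z ->]; by exists z.
  by move=> [z _ ->]; rewrite -(eq_row_base K) submxMl.
rewrite card_imset; last exact: row_free_inj (row_base_free K).
by rewrite cardsT card_mx mul1n.
Qed.

Lemma card_solutions n s (A : 'M[F]_(n, s)) (b : 'rV[F]_s) :
  #|[set x : 'rV[F]_n | x *m A == b]| =
    if (b <= A)%MS then (#|F| ^ (n - \rank A))%N else 0%N.
Proof.
case: submxP => [[x0 ->]| nb].
  have -> : [set x : 'rV[F]_n | x *m A == x0 *m A] =
      [set x0 + y | y in [set y : 'rV[F]_n | (y <= kermx A)%MS]].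
    apply/setP => x; rewrite inE; apply/idP/imsetP.
      move/eqP=> e; exists (x - x0); last by rewrite addrC subrK.
      by rewrite inE sub_kermx mulmxBl e subrr.
    move=> [y]; rewrite inE sub_kermx => /eqP y0 ->.
    by rewrite mulmxDl y0 addr0.
  by rewrite card_imset ?card_rowspace ?mxrank_ker //; exact: addrI.
apply/eqP; rewrite cards_eq0; apply/eqP/setP => x; rewrite !inE.
by apply/negP => /eqP e; apply: nb; exists x.
Qed.

Lemma sub_rank (K : fieldType) m1 m2 n (A : 'M[K]_(m1, n)) (B : 'M[K]_(m2, n)) :
  (B <= A)%MS = (\rank (col_mx A B) == \rank A).
Proof.
have := mxrank_leqif_sup (addsmxSl A B).
rewrite addsmx_sub submx_refl /= => [[_ <-]].
by rewrite -addsmxE eq_sym.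
Qed.
End FieldCount.

Lemma sorted_dvdz_zero (d : seq int) i j :
  sorted (fun x y => (x %| y)%Z) d -> (i <= j)%N -> d`_i = 0 -> d`_j = 0.
Proof.
move=> sd lij di0.
have [jl|] := ltnP j (size d); last by move=> jg; rewrite nth_default.
have il : (i < size d)%N by apply: leq_ltn_trans jl.
have := sorted_leq_nth (@dvdz_trans) (@dvdzz) 0 sd.
move=> /(_ i j il jl lij); rewrite di0 dvd0z => /eqP //.
Qed.

Lemma map_unitmx_int (F : fieldType) n (R : 'M[int]_n) :
  R \in unitmx -> map_mx (intmul (1:F)) R \in unitmx.
Proof.
move=> h; have := mulmxV h => /(congr1 (map_mx (intmul (1:F)))).
by rewrite map_mxM map_mx1 => /mulmx1_unit [].
Qed.

Lemma rank_snf (F : fieldType) s n (M : 'M[int]_(s,n)) (L : 'M[int]_s)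
  (R : 'M[int]_n) (d : seq int) :
  L \in unitmx -> R \in unitmx -> sorted (fun x y => (x %| y)%Z) d ->
  M = L *m (\matrix_(i, j) (d`_i *+ (i == j :> nat))) *m R ->
  (forall i, (i < find (fun z : int => z == 0) d)%N -> (d`_i)%:~R != 0 :> F) ->
  \rank (map_mx (fun z : int => z%:~R : F) M) =
    minn n (minn s (find (fun z : int => z == 0) d)).
Proof.
move=> uL uR sd -> nz.
set r := find _ d.
have dz i : (r <= i)%N -> d`_i = 0 :> int.
  move=> ri; have [rs|] := ltnP r (size d).
    apply: (sorted_dvdz_zero sd ri); apply/eqP.
    by apply: (@nth_find _ 0 (fun z : int => z == 0)); rewrite has_find.
  by move=> sr; rewrite nth_default // (leq_trans sr ri).
pose u := \row_(i < s) (if (i < r)%N then (d`_i)%:~R else 1 : F).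
have uu : diag_mx u \in unitmx.
  rewrite unitmxE det_diag unitfE; apply/prodf_neq0 => i _.
  rewrite mxE; case: ifP => [/nz //|_]; exact: oner_neq0.
have -> : map_mx (fun z : int => z%:~R : F)
     (L *m (\matrix_(i, j) (d`_i *+ (i == j :> nat))) *m R) =
   map_mx intr L *m (diag_mx u *m pid_mx r) *m map_mx intr R.
  rewrite !map_mxM; congr (_ *m _ *m _).
  apply/matrixP => i j; rewrite mul_diag_mx !mxE.
  case: (ltnP i r) => ir.
    by rewrite andbT rmorphMn mulr_natr.
  by rewrite dz // mul0rn rmorph0 andbF mulr0.
rewrite mxrankMfree; last by rewrite row_free_unit map_unitmx_int.
rewrite eqmxMfull; last by rewrite row_full_unit map_unitmx_int.
rewrite eqmxMfull; last by rewrite row_full_unit.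
rewrite -pid_mx_minv -pid_mx_minh rank_pid_mx ?geq_minl //.
by rewrite minnCA geq_minl.
Qed.

Lemma Fp_intr_neq0 q (z : int) : prime q -> z != 0 -> (`|z| < q)%N ->
  (z%:~R : 'F_q) != 0.
Proof.
move=> pq z0 zq.
have natnz k : (0 < k < q)%N -> (k%:R : 'F_q) != 0.
  move=> /andP [k0 kq]; rewrite -(dvdn_pcharf (pchar_Fp pq)).
  by apply/negP => /(dvdn_leq k0); rewrite leqNgt kq.
case: z z0 zq => k z0 zq.
  by apply: natnz; rewrite zq andbT lt0n; move: z0; rewrite eqz_nat.
by rewrite NegzE mulrNz oppr_eq0 natnz.
Qed.

Lemma rank_modq s n (M : 'M[int]_(s, n)) : exists N, forall q, prime q ->
  (N <= q)%N ->
  \rank (map_mx (intmul (1 : 'F_q)) M) = \rank (map_mx (intmul (1 : rat)) M).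
Proof.
have [L uL [R uR [d sd eM]]] := int_Smith_normal_form M.
exists (\sum_(i < size d) absz (nth 0%R d i)).+1 => q pq Nq.
rewrite (rank_snf uL uR sd eM) ?(rank_snf uL uR sd eM) //.
  by move=> i /(@before_find _ 0) /negbT; rewrite intr_eq0.
move=> i ir; have /(@before_find _ 0) /negbT di := ir.
apply: Fp_intr_neq0 => //; apply: leq_trans Nq; rewrite ltnS.
have il : (i < size d)%N by apply: leq_trans ir (find_size _ _).
by rewrite (bigD1 (Ordinal il)) //= leq_addr.
Qed.

Lemma incl_excl (R : comRingType) (X I : finType) (C : I -> X -> bool) :
  (#|[set x | [forall i, ~~ C i x]]|%:R : R) =
  \sum_(B : {set I}) (-1) ^+ #|B| * (#|[set x | [forall i in B, C i x]]|)%:R.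
Proof.
have cnt (P : pred X) : (#|[set x | P x]|%:R : R) = \sum_x (P x)%:R.
  rewrite -sum1_card natr_sum big_mkcond /=; apply: eq_bigr => x _.
  by rewrite inE; case: (P x).
rewrite cnt.
under eq_bigr => x _.
  have -> : ([forall i, ~~ C i x]%:R : R) = \prod_i (- (C i x)%:R + 1).
    case: forallP => [h|h].
      by rewrite big1 // => i _; rewrite (negbTE (h i)) oppr0 add0r.
    have [i ci] : exists i, C i x.
      case: (boolP [exists i, C i x]) => [/existsP //|/existsPn H].
      by exfalso; apply: h.
    by rewrite (bigD1 i) //= ci addNr mul0r.
  rewrite bigA_distr.
  over.
rewrite exchange_big /=; apply: eq_bigr => B _.
rewrite cnt big_distrr /=; apply: eq_bigr => x _.
rewrite (bigID (fun i => i \in B)) /= [X in _ * X]big1; last by move=> i /negbTE ->.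
rewrite mulr1.
under eq_bigr => i iB do rewrite iB -mulN1r.
rewrite big_split /= prodr_const; congr (_ * _).
case: forall_inP => [h|h].
  by rewrite big1 // => i /h ->.
have [i iB ci] : exists2 i, i \in B & ~~ C i x.
  case: (boolP [exists i in B, ~~ C i x]) => [/exists_inP //|/exists_inPn H].
  by exfalso; apply: h => i /H /negPn.
by rewrite (bigD1 i) //= (negbTE ci) mul0r.
Qed.

Local Close Scope ring_scope.

Lemma count_indep (m : nat) (a b : 'I_m -> nat) (q n : nat) :
  #|[set f : {ffun 'I_n -> 'I_q} | injectiveb f &&
        [forall i, forall j, ~~ Gadj a b (f i) (f j)]]| =
  n`! * num_indep a b q n.
Proof.
set T := [set f : {ffun 'I_n -> 'I_q} | _].
rewrite -sum1_card (partition_big (fun f : {ffun 'I_n -> 'I_q} => [set f i | i in 'I_n]) predT) //=.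
rewrite /num_indep -sum1_card big_distrr /= muln1 [RHS]big_mkcond /=.
apply: eq_bigr => S _.
rewrite inE.
have -> : \sum_(f in T | [set f i | i in 'I_n] == S) 1 =
   #|[set f : {ffun 'I_n -> 'I_q} in ffun_on S | injectiveb f &&
        ((#|S| == n) && independent a b S)]|.
  rewrite sum1_card; apply: eq_card => f; rewrite unfold_in /= !inE.
  apply/idP/idP.
    move=> /andP [/andP [injf indf] /eqP imS].
    have injf' := injectiveP _ injf.
    have cS : #|S| = n by rewrite -imS card_imset // card_ord.
    rewrite injf cS eqxx /=; apply/andP; split.
      by apply/forallP => i; rewrite -imS imset_f.
    apply/forall_inP => u; rewrite -imS => /imsetP [i _ ->].
    apply/forall_inP => v /imsetP [j _ ->].
    by move/forallP: indf => /(_ i) /forallP /(_ j).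
  move=> /and4P [/forallP fS injf /eqP cS indS].
  have injf' := injectiveP _ injf.
  have imS : [set f i | i in 'I_n] = S.
    apply/eqP; rewrite eqEcard card_imset // card_ord cS leqnn andbT.
    by apply/subsetP => u /imsetP [i _ ->]; apply: fS.
  rewrite injf imS eqxx andbT /=.
  apply/forallP => i; apply/forallP => j.
  by move/forall_inP: indS => /(_ _ (fS i)) /forall_inP /(_ _ (fS j)).
case: ifP => [/andP [/eqP cS indS]|nS].
  rewrite (eq_card (B := [set f : {ffun 'I_n -> 'I_q} in ffun_on S | injectiveb f])).
    rewrite card_inj_ffuns_on card_ord.
    transitivity (n ^_ n); last exact: ffactnn.
    by congr (_ ^_ _); rewrite -cS; apply: eq_card.
  by move=> f; rewrite !inE andbT.
apply/eqP; rewrite cards_eq0; apply/eqP/setP => f; rewrite !inE.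
by rewrite !andbF.
Qed.

Local Open Scope ring_scope.

Section Main.
Variables (m : nat) (a b : 'I_m -> nat) (n : nat).

Definition origI : seq ('rV[int]_n * int) :=
  [seq (delta_mx 0 p.1 - delta_mx 0 p.2, 0)
          | p : 'I_n * 'I_n <- enum [set: 'I_n * 'I_n] & (p.1 < p.2)%N]
  ++ [seq (delta_mx 0 p.1.1 - (a p.2)%:Z *: delta_mx 0 p.1.2, (b p.2)%:Z)
          | p : 'I_n * 'I_n * 'I_m <- enum [set: 'I_n * 'I_n * 'I_m] & p.1.1 != p.1.2].

Definition condq (R : ringType) (h : 'rV[int]_n * int) (x : 'rV[R]_n) : bool :=
  (x *m (map_mx (intmul 1) h.1)^T) 0 0 == h.2%:~R.

Lemma condq_eval (R : comRingType) (x : 'rV[R]_n) i j (c d : int) :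
  condq (delta_mx 0 i - c *: delta_mx 0 j, d) x = (x 0 i - c%:~R * x 0 j == d%:~R).
Proof.
rewrite /condq /= map_mxB map_mxZ !map_delta_mx linearB linearZ /= !trmx_delta.
by rewrite mulmxBr -scalemxAr -!colE !mxE.
Qed.

Definition phiq (q : nat) (f : {ffun 'I_n -> 'I_q}) : 'rV['F_q]_n :=
  \row_j ((f j : nat)%:R).

Lemma Fp_nat_eq q (u v : nat) : prime q -> (u < q)%N ->
  ((u%:R : 'F_q) == v%:R) = (u == v %% q)%N.
Proof.
move=> pq uq; apply/eqP/eqP => [e|->].
  by have := congr1 (@nat_of_ord _) e; rewrite !val_Fp_nat // modn_small.
by rewrite Fp_nat_mod.
Qed.

Lemma all_origI q (f : {ffun 'I_n -> 'I_q}) : prime q ->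
  all (fun h => ~~ condq h (phiq f)) origI =
  injectiveb f && [forall i, forall j, ~~ Gadj a b (f i) (f j)].
Proof.
move=> pq.
have ev1 i j : condq (delta_mx 0 i - delta_mx 0 j, 0) (phiq f) = (f i == f j).
  have := condq_eval (phiq f) i j 1 0; rewrite scale1r => ->.
  by rewrite !mxE mulr1z mulr0z mul1r subr_eq0 Fp_nat_eq // modn_small.
have ev2 i j k : condq (delta_mx 0 i - (a k)%:Z *: delta_mx 0 j, (b k)%:Z) (phiq f)
     = (f i == ((a k * f j + b k) %% q)%N :> nat).
  rewrite condq_eval !mxE -!pmulrn subr_eq -natrM -natrD Fp_nat_eq //.
  by rewrite addnC.
have -> : all (fun h => ~~ condq h (phiq f)) origI =
   [forall p : 'I_n * 'I_n, (p.1 < p.2)%N ==> (f p.1 != f p.2)] &&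
   [forall p : 'I_n * 'I_n * 'I_m, (p.1.1 != p.1.2) ==>
       (f p.1.1 != ((a p.2 * f p.1.2 + b p.2) %% q)%N :> nat)].
  rewrite all_cat !all_map !all_filter; congr andb.
    apply/allP/forallP => [H x|H x _]; last by rewrite /= in_setT ev1 /=; exact: H.
    by have := H x; rewrite -enumT mem_enum /= in_setT /= ev1; apply.
  apply/allP/forallP => [H x|H x _]; last by rewrite /= in_setT ev2 /=; exact: H.
  by have := H x; rewrite -enumT mem_enum /= in_setT /= ev2; apply.
apply/andP/andP => [[/forallP H1 /forallP H2]|[/injectiveP inj /forallP H]].
  have inj : injective f.
    move=> i j e; apply/eqP; apply: contraT => nij.
    case: (ltngtP i j) => [lij|lji|/val_inj eij]; last by rewrite eij eqxx in nij.
      by have := H1 (i, j); rewrite /= lij e eqxx.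
    by have := H1 (j, i); rewrite /= lji e eqxx.
  split; first exact/injectiveP.
  apply/forallP => i; apply/forallP => j; rewrite /Gadj negb_and negbK.
  case: (eqVneq (f i) (f j)) => //= nfij.
  have nij : i != j by apply: contraNneq nfij => ->.
  apply/existsPn => k; rewrite negb_or; apply/andP; split.
    by have := H2 (i, j, k); rewrite /= nij.
  by have := H2 (j, i, k); rewrite /= eq_sym nij.
split.
  apply/forallP => -[i j] /=; apply/implyP => lij.
  apply/eqP => /inj eij; move: lij; rewrite eij ltnn.
  done.
apply/forallP => -[[i j] k] /=; apply/implyP => nij.
have nfij : f i != f j by apply: contra_neq nij; exact: inj.
have := H i => /forallP /(_ j); rewrite /Gadj nfij /= => /existsPn /(_ k).
by rewrite negb_or => /andP [].
Qed.

Lemma card_phiq q : prime q ->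
  #|[set x : 'rV['F_q]_n | all (fun h => ~~ condq h x) origI]| =
  #|[set f : {ffun 'I_n -> 'I_q} | injectiveb f &&
        [forall i, forall j, ~~ Gadj a b (f i) (f j)]]|.
Proof.
move=> pq.
have inj : injective (@phiq q).
  move=> f g e; apply/ffunP => j; apply/val_inj/eqP.
  have := congr1 (fun x : 'rV['F_q]_n => x 0 j) e; rewrite !mxE => /eqP.
  by rewrite Fp_nat_eq // modn_small.
rewrite -(card_imset _ inj); apply: eq_card => x; rewrite inE.
apply/idP/imsetP => [H|[f]]; last by rewrite inE -all_origI // => H ->.
have lt (j : 'I_n) : (x ord0 j < q)%N by rewrite -[X in (_ < X)%N](Fp_cast pq) ltn_ord.
have e : phiq [ffun j => Ordinal (lt j)] = x.
  by apply/rowP => j; rewrite !mxE ffunE /= natr_Zp.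
by exists [ffun j => Ordinal (lt j)]; rewrite // inE -all_origI // e.
Qed.
End Main.

Section Main2.
Variables (m : nat) (a b : 'I_m -> nat) (n : nat).

Definition toQ (h : 'rV[int]_n * int) : hyp n := (map_mx (intmul 1) h.1, h.2%:~R).
Definition nzf h := hyp_normalize (toQ h).
Definition kof (h : 'rV[int]_n * int) : rat :=
  head 1 [seq x <- [seq (toQ h).1 0 j | j <- enum 'I_n] | x != 0].

Lemma nzfE h : nzf h = ((kof h)^-1 *: (toQ h).1, (toQ h).2 / kof h).
Proof. by []. Qed.

Lemma kof_neq0 h : kof h != 0.
Proof.
rewrite /kof; case E: [seq x <- _ | _] => [|k s] /= //.
have : k \in [seq x <- [seq (toQ h).1 0 j | j <- enum 'I_n] | x != 0].
  by rewrite E mem_head.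
by rewrite mem_filter => /andP [].
Qed.

Lemma arrA_eq : arrA a b n = undup (map nzf (origI a b n)).
Proof.
have -> : map nzf (origI a b n) = map (@hyp_normalize n) (map toQ (origI a b n)).
  by rewrite -map_comp.
rewrite /arrA /arrangement /origI; congr (undup (map _ _)).
rewrite map_cat -!map_comp.
congr (_ ++ _); apply: eq_map => p /=;
  by rewrite /toQ /= map_mxB ?map_mxZ !map_delta_mx //= -?pmulrn.
Qed.

Definition hat (i : 'I_(size (arrA a b n))) : 'rV[int]_n * int :=
  nth (0, 0) (origI a b n) (index (nth (0, 0) (arrA a b n) i) (map nzf (origI a b n))).

Lemma hat_spec i : nzf (hat i) = nth (0, 0) (arrA a b n) i /\ hat i \in origI a b n.
Proof.
have hA : nth (0, 0) (arrA a b n) i \in map nzf (origI a b n).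
  by rewrite -mem_undup -arrA_eq mem_nth.
have il := hA; rewrite -index_mem size_map in il.
split; last exact: mem_nth.
by rewrite /hat -(nth_map _ (nzf (0, 0))) // nth_index.
Qed.

Lemma prop_rat (k1 k2 u1 u2 : rat) : k1 != 0 -> k2 != 0 ->
  k1^-1 * u1 = k2^-1 * u2 ->
  (numq k2 * denq k1)%:~R * u1 = (numq k1 * denq k2)%:~R * u2.
Proof.
move=> k10 k20 e; rewrite !intrM !numqE.
have -> : u1 = k1 * (k2^-1 * u2) by rewrite -e mulrA mulfV // mul1r.
by field.
Qed.

Lemma condq_sum q (h : 'rV[int]_n * int) (x : 'rV['F_q]_n) :
  condq h x = (\sum_j x 0 j * (h.1 0 j)%:~R == h.2%:~R).
Proof. by rewrite /condq mxE; congr (_ == _); apply: eq_bigr => j _; rewrite !mxE. Qed.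

Definition bnd (h : 'rV[int]_n * int) : nat :=
  (absz (numq (kof h)) + absz (denq (kof h)))%N.

Lemma cond_prop q (h1 h2 : 'rV[int]_n * int) : prime q -> nzf h1 = nzf h2 ->
  (bnd h1 < q)%N -> (bnd h2 < q)%N ->
  forall x : 'rV['F_q]_n, condq h1 x = condq h2 x.
Proof.
move=> pq e b1 b2 x.
set al := (numq (kof h2) * denq (kof h1))%R.
set be := (numq (kof h1) * denq (kof h2))%R.
have intE (z1 z2 : int) : (al%:~R * z1%:~R = be%:~R * z2%:~R :> rat) -> al * z1 = be * z2.
  by rewrite -!intrM => /intr_inj.
rewrite !nzfE in e; case: e => e1 e2.
have E1 j : al * h1.1 0 j = be * h2.1 0 j.
  apply: intE; apply: prop_rat; try exact: kof_neq0.
  by have := congr1 (fun M : 'rV[rat]_n => M 0 j) e1; rewrite !mxE.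
have E2 : al * h1.2 = be * h2.2.
  by apply: intE; apply: prop_rat; try exact: kof_neq0; rewrite mulrC e2 mulrC.
have nz (k : rat) : k != 0 -> (absz (numq k) + absz (denq k) < q)%N ->
   ((numq k)%:~R : 'F_q) != 0 /\ ((denq k)%:~R : 'F_q) != 0.
  move=> k0 bk; split; apply: Fp_intr_neq0 => //;
    rewrite ?numq_eq0 ?denq_neq0 //; apply: leq_ltn_trans bk;
    by rewrite ?leq_addr ?leq_addl.
have [n1 d1] := nz _ (kof_neq0 h1) b1.
have [n2 d2] := nz _ (kof_neq0 h2) b2.
have alnz : (al%:~R : 'F_q) != 0 by rewrite intrM mulf_neq0.
have benz : (be%:~R : 'F_q) != 0 by rewrite intrM mulf_neq0.
rewrite !condq_sum -(inj_eq (mulfI alnz)) -[in RHS](inj_eq (mulfI benz)).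
rewrite !mulr_sumr -!intrM E2; congr (_ == _); apply: eq_bigr => j _.
by rewrite mulrCA -intrM E1 intrM mulrCA.
Qed.
End Main2.

Lemma count_modq s n0 (Mi : 'M[int]_(n0, s)) (di : 'rV[int]_s) :
  exists N, forall q, prime q -> (N <= q)%N ->
  #|[set x : 'rV['F_q]_n0 | x *m map_mx (intmul 1) Mi == map_mx (intmul 1) di]| =
  if (map_mx (intmul (1 : rat)) di <= map_mx (intmul (1 : rat)) Mi)%MS
  then (q ^ (n0 - \rank (map_mx (intmul (1 : rat)) Mi)))%N else 0%N.
Proof.
have [N1 H1] := rank_modq Mi.
have [N2 H2] := rank_modq (col_mx Mi di).
exists (maxn N1 N2) => q pq Nq.
rewrite card_solutions card_Fp // !sub_rank -!map_col_mx.
have q1 : (N1 <= q)%N by exact: leq_trans (leq_maxl _ _) Nq.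
have q2 : (N2 <= q)%N by exact: leq_trans (leq_maxr _ _) Nq.
by rewrite H1 // H2 // [in RHS]sub_rank -map_col_mx.
Qed.

Section Main3.
Variables (m : nat) (a b : 'I_m -> nat) (n : nat).
Local Notation A := (arrA a b n).

Definition MB (B : {set 'I_(size A)}) : 'M[int]_(n, size A) :=
  \matrix_(j, i) (if i \in B then (hat i).1 0 j else 0).
Definition dB (B : {set 'I_(size A)}) : 'rV[int]_(size A) :=
  \row_i (if i \in B then (hat i).2 else 0).

Lemma condq_sumR (R : comRingType) (h : 'rV[int]_n * int) (x : 'rV[R]_n) :
  condq h x = (\sum_j x 0 j * (h.1 0 j)%:~R == h.2%:~R).
Proof. by rewrite /condq mxE; congr (_ == _); apply: eq_bigr => j _; rewrite !mxE. Qed.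

Lemma claim1 (R : comRingType) (B : {set 'I_(size A)}) (x : 'rV[R]_n) :
  [forall i in B, condq (hat i) x] =
  (x *m map_mx (intmul 1) (MB B) == map_mx (intmul 1) (dB B)).
Proof.
have E i : (x *m map_mx (intmul 1) (MB B)) 0 i =
    if i \in B then \sum_j x 0 j * ((hat i).1 0 j)%:~R else 0.
  rewrite mxE; case: ifP => iB.
    by apply: eq_bigr => j _; rewrite !mxE iB.
  by rewrite big1 // => j _; rewrite !mxE iB mulr0z mulr0.
apply/forall_inP/eqP => [H|H].
  apply/rowP => i; rewrite E !mxE; case: ifP => iB; last by rewrite mulr0z.
  by apply/eqP; rewrite -condq_sumR H.
move=> i iB; rewrite condq_sumR; apply/eqP.
by have := congr1 (fun M : 'rV[R]_(size A) => M 0 i) H; rewrite E !mxE iB.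
Qed.

Lemma nth_condq (i : 'I_(size A)) (x : 'rV[rat]_n) :
  (\sum_j (nth (0, 0) A i).1 0 j * x 0 j = (nth (0, 0) A i).2) <->
  condq (hat i) x.
Proof.
have [<- _] := hat_spec i; rewrite nzfE condq_sumR /=.
have k0 : (kof (hat i))^-1 != 0 by rewrite invr_eq0 kof_neq0.
rewrite -(inj_eq (mulfI k0)) mulr_sumr mulrC.
split => [e|/eqP e].
  apply/eqP; rewrite -e; apply: eq_bigr => j _; rewrite !mxE; ring.
rewrite -e; apply: eq_bigr => j _; rewrite !mxE; ring.
Qed.

Lemma claim2 (B : {set 'I_(size A)}) :
  inter_nonempty B <->
  (map_mx (intmul (1 : rat)) (dB B) <= map_mx (intmul (1 : rat)) (MB B))%MS.
Proof.
split.
  move=> [x H]; apply/submxP; exists x; apply/esym/eqP; rewrite -claim1.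
  by apply/forall_inP => i /H /nth_condq.
move=> /submxP [x e]; exists x => i iB; apply/nth_condq.
by move: e => /esym /eqP; rewrite -claim1 => /forall_inP /(_ i iB).
Qed.

Lemma claim3 (B : {set 'I_(size A)}) :
  arr_rank B = \rank (map_mx (intmul (1 : rat)) (MB B)).
Proof.
rewrite /arr_rank; pose k := \row_(i < size A) (kof (hat i))^-1.
have -> : @normals_mx n A B = diag_mx k *m (map_mx (intmul (1 : rat)) (MB B))^T.
  apply/matrixP => i j; rewrite mul_diag_mx !mxE.
  have [<- _] := hat_spec i; rewrite nzfE /=.
  by case: ifP => iB; rewrite ?mulr0z ?mulr0 // !mxE.
rewrite eqmxMfull ?mxrank_tr //.
rewrite row_full_unit unitmxE det_diag unitfE; apply/prodf_neq0 => i _.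
by rewrite mxE invr_eq0 kof_neq0.
Qed.
End Main3.

Lemma ex_bound (T : finType) (P : T -> nat -> Prop) :
  (forall t, exists N, forall q, (N <= q)%N -> P t q) ->
  exists N, forall t q, (N <= q)%N -> P t q.
Proof.
move=> H.
suff [N HN] : exists N, forall t, t \in enum T -> forall q, (N <= q)%N -> P t q.
  by exists N => t q; apply: HN; rewrite mem_enum.
elim: (enum T) => [|t s [N HN]]; first by exists 0%N.
have [Nt Ht] := H t; exists (maxn Nt N) => u; rewrite inE => /orP [/eqP ->|us] q Nq.
  by apply: Ht; apply: leq_trans Nq; rewrite leq_maxl.
by apply: HN => //; apply: leq_trans Nq; rewrite leq_maxr.
Qed.

Lemma bnd_sum (T : eqType) (s : seq T) (F : T -> nat) x :
  x \in s -> (F x <= \sum_(y <- s) F y)%N.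
Proof. by move=> xs; rewrite (big_rem x) //= leq_addr. Qed.

Section Main4.
Variables (m : nat) (a b : 'I_m -> nat) (n : nat).
Local Notation A := (arrA a b n).

Lemma avoid_eq q : prime q -> (\sum_(h <- origI a b n) bnd h < q)%N ->
  forall x : 'rV['F_q]_n,
  [forall i : 'I_(size A), ~~ condq (hat i) x] =
  all (fun h => ~~ condq h x) (origI a b n).
Proof.
move=> pq bq x.
have bh h : h \in origI a b n -> (bnd h < q)%N.
  by move=> hin; apply: leq_ltn_trans bq; apply: bnd_sum.
apply/forallP/allP => [H h hin|H i]; last first.
  by apply: H; have [_ ->] := hat_spec i.
have hA : nzf h \in A by rewrite arrA_eq mem_undup map_f.
have il : (index (nzf h) A < size A)%N by rewrite index_mem.
have [e hi] := hat_spec (Ordinal il).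
rewrite /= nth_index // in e.
by rewrite (cond_prop pq (esym e)) ?bh //; apply: H.
Qed.
End Main4.

Unset Implicit Arguments. Set Strict Implicit. Set Printing Implicit Defensive.

Theorem proposition1p4 (m : nat) (a b : 'I_m -> nat) :
  (0 < m)%N ->
  (forall k : 'I_m, (a k, b k) != (1%N, 0%N)) ->
  forall n : nat, (1 <= n)%N ->
  exists N : nat, forall q : nat, prime q -> (N <= q)%N ->
    ((num_indep a b q n)%:R : rat) =
      (arr_charpoly (arrA a b n)).[q%:R] / (n`!)%:R.
Proof.
move=> _ _ n _.
set A := arrA a b n.
have [NB HB] : exists N, forall (B : {set 'I_(size A)}) q, (N <= q)%N -> prime q ->
  #|[set x : 'rV['F_q]_n | x *m map_mx (intmul 1) (MB B) == map_mx (intmul 1) (dB B)]| =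
  if (map_mx (intmul (1 : rat)) (dB B) <= map_mx (intmul (1 : rat)) (MB B))%MS
  then (q ^ (n - \rank (map_mx (intmul (1 : rat)) (MB B))))%N else 0%N.
  apply: (ex_bound (P := fun (B : {set 'I_(size A)}) q => prime q -> _)) => B.
  have [N HN] := count_modq (MB B) (dB B).
  by exists N => q Nq pq; apply: HN.
exists (maxn NB (\sum_(h <- origI a b n) bnd h).+1) => q pq Nq.
have qB : (NB <= q)%N by apply: leq_trans Nq; rewrite leq_maxl.
have qe : (\sum_(h <- origI a b n) bnd h < q)%N by apply: leq_trans Nq; rewrite leq_maxr.
have h1 : (n`! * num_indep a b q n)%N =
    #|[set x : 'rV['F_q]_n | [forall i : 'I_(size A), ~~ condq (hat i) x]]|.
  rewrite -count_indep -(@card_phiq m a b n q pq); apply: eq_card => x; rewrite !inE.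
  by rewrite avoid_eq.
have h3 (B : {set 'I_(size A)}) :
    #|[set x : 'rV['F_q]_n | [forall i in B, condq (hat i) x]]| =
    if Defs.decP (inter_nonempty B) then (q ^ (n - arr_rank B))%N else 0%N.
  rewrite (eq_card (B := [set x : 'rV['F_q]_n | x *m map_mx (intmul 1) (MB B)
       == map_mx (intmul 1) (dB B)])); last by move=> x; rewrite !inE claim1.
  rewrite HB // claim3 /Defs.decP.
  case: excluded_middle_informative => [/claim2 -> //|nI].
  by case: ifP => // /claim2.
have h2 := incl_excl rat (fun i (x : 'rV['F_q]_n) => condq (hat i) x).
have nf : (n`!)%:R != 0 :> rat by rewrite pnatr_eq0 -lt0n fact_gt0.
apply: (mulIf nf); rewrite divfK // -natrM mulnC h1 h2.
rewrite /arr_charpoly horner_sum [RHS]big_mkcond /=.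
apply: eq_bigr => B _.
rewrite h3; case: ifP => _; last by rewrite mulr0.
by rewrite hornerZ hornerXn natrX.
Qed.
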